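(* Let $\alpha,\mu>0$ with $\varrho=\alpha/\mu<1$, and for $m\in\mathbb{N}$ let $\mathbf{E}_m$ be the stationary distribution on $\mathbb{N}$ of the single-server Processor-Sharing queue with $m$ permanent customers, Poisson arrivals of rate $\alpha$ and exponential service requirements of rate $\mu$ (described in the context). Then for all fixed $x>0$, $y>0$, \[ \lim_{A\to\infty}\frac1A\log\mathbf{E}_{[Ay]}([Ax])=-K(x,y),\qquad K(x,y)=x\log\Big(\frac{x}{\varrho}\Big)+y\log y-(x+y)\log(x+y)-y\log(1-\varrho). \]
   Context: The single-server PS queue with $m$ permanent customers is the birth-and-death process on $\mathbb{N}$ (number $n$ of non-permanent customers) with transitions $n\to n+1$ at rate $\alpha$ and $n\to n-1$ at rate $\mu n/(n+m)$ (the $n+m$ customers share unit capacity equally; permanent customers never leave). $[z]$ denotes the integer part of $z$. *)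

(* Defs.v *)
From Stdlib Require Import Reals Lra Lia ZArith.
From Coquelicot Require Import Coquelicot.
Open Scope R_scope.

(* Transition rates of the PS queue with m permanent customers, on states n : nat
   (number of non-permanent customers). *)
Definition birth_rate (alpha : R) (n : nat) : R := alpha.
Definition death_rate (mu : R) (m n : nat) : R :=
  match n with
  | O => 0
  | S _ => mu * INR n / INR (n + m)
  end.

Definition is_stationary_PS (alpha mu : R) (m : nat) (p : nat -> R) : Prop :=
  (forall n, 0 <= p n) /\
  is_series p 1 /\
  forall n : nat,
    p n * (birth_rate alpha n + death_rate mu m n) =
      (match n with O => 0 | S k => p k * birth_rate alpha k end)
      + p (S n) * death_rate mu m (S n).

Definition floor_nat (z : R) : nat := Z.to_nat (Int_part z).

Definition K_rate (rho x y : R) : R :=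
  x * ln (x / rho) + y * ln y - (x + y) * ln (x + y) - y * ln (1 - rho).

(* Main.v *)
Require Import Defs.
From Stdlib Require Import Reals Lra Lia Factorial ZArith.
From Coquelicot Require Import Coquelicot.
Open Scope R_scope.

Definition aa (r : R) (m n : nat) : R :=
  r ^ n * INR (fact (n + m)) / (INR (fact n) * INR (fact m)).

Lemma INR_fact_pos k : 0 < INR (fact k).
Proof. apply lt_0_INR, lt_O_fact. Qed.

Lemma db alpha mu m p : 0 < alpha -> 0 < mu -> is_stationary_PS alpha mu m p ->
  forall n, p n * alpha = p (S n) * death_rate mu m (S n).
Proof.
  intros Ha Hm [_ [_ H]]. induction n.
  - specialize (H 0%nat). unfold birth_rate in H. simpl death_rate in H at 1. lra.
  - specialize (H (S n)). unfold birth_rate in *. lra.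
Qed.

Lemma aa_S r m n : aa r m (S n) = aa r m n * r * INR (S n + m) / INR (S n).
Proof.
  unfold aa. simpl (S n + m)%nat.
  rewrite !fact_simpl, !mult_INR.
  pose proof (INR_fact_pos n). pose proof (INR_fact_pos m). pose proof (INR_fact_pos (n+m)).
  assert (INR (S n) <> 0) by (apply not_0_INR; lia).
  intros. simpl pow. field. lra.
Qed.
Lemma stat_form alpha mu m p : 0 < alpha -> 0 < mu -> is_stationary_PS alpha mu m p ->
  forall n, p n = p 0%nat * aa (alpha/mu) m n.
Proof.
  intros Ha Hm Hs. induction n.
  - unfold aa. simpl. field. pose proof (INR_fact_pos m). lra.
  - rewrite aa_S. pose proof (db alpha mu m p Ha Hm Hs n) as D.
    unfold death_rate in D.
    assert (INR (S n) <> 0) by (apply not_0_INR; lia).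
    assert (0 < INR (S n + m)) by (apply lt_0_INR; lia).
    assert (p (S n) = p n * alpha * INR (S n + m) / (mu * INR (S n))).
    { rewrite D. field. lra. }
    rewrite H1, IHn. field. lra.
Qed.
Lemma aa_0 r m : aa r m 0 = 1.
Proof. unfold aa. simpl. field. pose proof (INR_fact_pos m). lra. Qed.

Lemma pascal r m n : aa r (S m) (S n) - r * aa r (S m) n = aa r m (S n).
Proof.
  unfold aa. replace (S n + S m)%nat with (S (S (n + m))) by lia.
  replace (n + S m)%nat with (S (n + m)) by lia. simpl (S n + m)%nat.
  rewrite !fact_simpl, !mult_INR, !S_INR, plus_INR.
  pose proof (INR_fact_pos n). pose proof (INR_fact_pos m). pose proof (pos_INR n).
  pose proof (pos_INR m).
  simpl pow. field. lra.
Qed.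

Lemma c_ne0 r m c : is_series (fun n => c * aa r m n) 1 -> c <> 0.
Proof.
  intros H Hc. pose proof (is_series_scal_l 0 _ _ H) as H'.
  apply (is_series_ext _ (fun n => c * aa r m n)) in H'.
  - apply is_series_unique in H. apply is_series_unique in H'. rewrite H in H'.
    compute in H'. lra.
  - intros n. rewrite Hc. compute. ring.
Qed.

Lemma c_0 r c : 0 < r < 1 -> is_series (fun n => c * aa r 0 n) 1 -> c = 1 - r.
Proof.
  intros Hr H. assert (Rabs r < 1) by (rewrite Rabs_pos_eq; lra).
  pose proof (is_series_scal_l c _ _ (is_series_geom r H0)) as G.
  apply (is_series_ext _ (fun n => c * aa r 0 n)) in G.
  - apply is_series_unique in H. apply is_series_unique in G. rewrite H in G.
    change (1 = c * / (1 - r)) in G.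
    assert (c = c * / (1 - r) * (1 - r)) by (field; lra). rewrite <- G in H1. lra.
  - intros n. unfold aa. rewrite Nat.add_0_r. change (scal c (r^n)) with (c * r^n).
    simpl (fact 0). pose proof (INR_fact_pos n). simpl INR. change (@eq R (c * r ^ n) (c * (r ^ n * INR (fact n) / (INR (fact n) * 1)))). field; lra.
Qed.

Lemma c_step r m c c' : is_series (fun n => c * aa r m n) 1 ->
  is_series (fun n => c' * aa r (S m) n) 1 -> c' = (1 - r) * c.
Proof.
  intros H1 H2. pose proof (c_ne0 _ _ _ H1) as Hc.
  assert (A1 : is_series (fun n => c' * aa r (S m) (S n)) (1 - c')).
  { apply (is_series_incr_1 (fun n => c' * aa r (S m) n)).
    rewrite aa_0. match goal with |- is_series _ ?l => replace l with 1 by (unfold plus; simpl; ring) end. exact H2. }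
  pose proof (is_series_scal_l r _ _ H2) as A2.
  pose proof (is_series_minus _ _ _ _ A1 A2) as A3.
  apply (is_series_ext _ (fun n => c' * aa r m (S n))) in A3.
  2:{ intros n. rewrite <- (pascal r m n). unfold plus, opp, scal, mult; simpl. unfold mult; simpl. ring. }
  assert (B1 : is_series (fun n => c * aa r m (S n)) (1 - c)).
  { apply (is_series_incr_1 (fun n => c * aa r m n)).
    rewrite aa_0. match goal with |- is_series _ ?l => replace l with 1 by (unfold plus; simpl; ring) end. exact H1. }
  pose proof (is_series_scal_l (c'/c) _ _ B1) as B2.
  apply (is_series_ext _ (fun n => c' * aa r m (S n))) in B2.
  2:{ intros n. change (c'/c * (c * aa r m (S n)) = c' * aa r m (S n)). field. exact Hc. }
  apply is_series_unique in A3. apply is_series_unique in B2. rewrite A3 in B2.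
  change (1 - c' + - (r * 1) = c' / c * (1 - c)) in B2.
  assert (c' = c' / c * c) by (field; exact Hc).
  nra.
Qed.

Lemma E_form alpha mu E : 0 < alpha -> 0 < mu -> alpha / mu < 1 ->
  (forall m : nat, is_stationary_PS alpha mu m (E m)) ->
  forall m n, E m n = (1 - alpha/mu) ^ (S m) * aa (alpha/mu) m n.
Proof.
  intros Ha Hm Hr HE.
  assert (Hr0 : 0 < alpha / mu) by (apply Rdiv_lt_0_compat; lra).
  assert (S0 : forall m, is_series (fun n => E m 0%nat * aa (alpha/mu) m n) 1).
  { intros m. destruct (HE m) as [_ [Hs _]].
    apply (is_series_ext (E m)); [|exact Hs]. intros n. apply stat_form; auto. }
  assert (C : forall m, E m 0%nat = (1 - alpha/mu) ^ (S m)).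
  { induction m.
    - rewrite (c_0 _ _ (conj Hr0 Hr) (S0 0%nat)). simpl. ring.
    - rewrite (c_step _ _ _ _ (S0 m) (S0 (S m))), IHm. simpl. ring. }
  intros m n. rewrite (stat_form alpha mu m (E m) Ha Hm (HE m) n), C. reflexivity.
Qed.

Lemma ln_le_xm1 z : 0 < z -> ln z <= z - 1.
Proof. intros Hz. pose proof (exp_ineq1_le (ln z)). rewrite exp_ln in H; lra. Qed.

Lemma key1 K : 0 <= K -> K * (ln (K + 1) - ln K) <= 1.
Proof.
  intros HK. destruct (Req_dec K 0) as [->|HK0]; [lra|].
  assert (0 < K) by lra.
  rewrite <- ln_div by lra.
  pose proof (ln_le_xm1 ((K+1)/K)) as L. assert (0 < (K+1)/K) by (apply Rdiv_lt_0_compat; lra).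
  specialize (L H0). apply Rmult_le_compat_l with (r := K) in L; [|lra].
  replace (K * ((K+1)/K - 1)) with 1 in L by (field; lra). exact L.
Qed.

Lemma key2 K : 0 <= K -> 1 <= (K + 2) * (ln (K + 2) - ln (K + 1)).
Proof.
  intros HK.
  assert (ln (K+1) - ln (K+2) <= - / (K + 2)).
  { rewrite <- ln_div by lra. pose proof (ln_le_xm1 ((K+1)/(K+2))) as L.
    assert (0 < (K+1)/(K+2)) by (apply Rdiv_lt_0_compat; lra).
    specialize (L H). replace ((K+1)/(K+2) - 1) with (- / (K+2)) in L by (field; lra).
    exact L. }
  apply Rmult_le_compat_l with (r := K+2) in H; [|lra].
  replace ((K+2) * - / (K+2)) with (-1) in H by (field; lra). lra.
Qed.

Lemma lf_bounds k : INR k * ln (INR k) - INR k <= ln (INR (fact k)) <=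
   (INR k + 1) * ln (INR k + 1) - INR k.
Proof.
  induction k.
  - simpl. rewrite ln_1. rewrite Rplus_0_l, ln_1. lra.
  - rewrite fact_simpl, mult_INR, ln_mult by (apply lt_0_INR; try lia; apply lt_O_fact).
    rewrite S_INR. pose proof (pos_INR k).
    pose proof (key1 (INR k) H). pose proof (key2 (INR k) H).
    replace (INR k + 1 + 1) with (INR k + 2) by ring. nra.
Qed.

Lemma lf_err k : INR k * ln (INR k) - INR k <= ln (INR (fact k)) <=
   INR k * ln (INR k) - INR k + ln (INR k + 1) + 1.
Proof.
  pose proof (lf_bounds k). pose proof (key1 (INR k) (pos_INR k)). nra.
Qed.

Definition hh (w : R) : R := w * ln w.

Lemma hA A K : 0 < A -> 0 <= K -> K * ln K = A * hh (K / A) + K * ln A.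
Proof.
  intros HA HK. unfold hh. destruct (Req_dec K 0) as [->|H0].
  - unfold Rdiv. rewrite Rmult_0_l. ring.
  - rewrite ln_div by lra. field. lra.
Qed.

Lemma main_est r A m n : 0 < r < 1 -> 0 < A ->
  Rabs (/A * ln ((1-r)^(S m) * aa r m n) -
    ((INR m / A + / A) * ln (1-r) + INR n / A * ln r + hh ((INR n + INR m)/A)
     - hh (INR n / A) - hh (INR m / A))) <= 3 * (ln (INR n + INR m + 1) + 1) / A.
Proof.
  intros Hr HA. unfold aa.
  pose proof (INR_fact_pos n). pose proof (INR_fact_pos m). pose proof (INR_fact_pos (n+m)).
  assert (0 < (1-r)^(S m)) by (apply pow_lt; lra).
  assert (0 < r^n) by (apply pow_lt; lra).
  rewrite ln_mult, ln_div, ln_mult, ln_mult, !ln_pow; try lra;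
    try (apply Rmult_lt_0_compat; lra); try (apply Rdiv_lt_0_compat; try lra; apply Rmult_lt_0_compat; lra).
  pose proof (lf_err (n+m)) as E1. pose proof (lf_err n) as E2. pose proof (lf_err m) as E3.
  rewrite plus_INR in *. rewrite S_INR.
  pose proof (pos_INR n). pose proof (pos_INR m).
  assert (L2 : ln (INR n + 1) <= ln (INR n + INR m + 1)) by (apply ln_le; lra).
  assert (L3 : ln (INR m + 1) <= ln (INR n + INR m + 1)) by (apply ln_le; lra).
  assert (L0 : 0 <= ln (INR n + 1)) by (rewrite <- ln_1; apply ln_le; lra).
  assert (L0' : 0 <= ln (INR m + 1)) by (rewrite <- ln_1; apply ln_le; lra).
  rewrite (hA A (INR n + INR m)) in E1 by lra.
  rewrite (hA A (INR n)) in E2 by lra.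
  rewrite (hA A (INR m)) in E3 by lra.
  set (a := ln (INR (fact (n + m)))) in *.
  set (b := ln (INR (fact n))) in *.
  set (c := ln (INR (fact m))) in *.
  set (e1 := a - (A * hh ((INR n + INR m) / A) + (INR n + INR m) * ln A) + (INR n + INR m)).
  set (e2 := b - (A * hh (INR n / A) + INR n * ln A) + INR n).
  set (e3 := c - (A * hh (INR m / A) + INR m * ln A) + INR m).
  match goal with |- Rabs ?X <= _ => replace X with (/A * (e1 - e2 - e3)) end.
  2:{ unfold e1, e2, e3. field. lra. }
  rewrite Rabs_mult, Rabs_inv, (Rabs_pos_eq A) by lra.
  unfold Rdiv. rewrite Rmult_comm. apply Rmult_le_compat_r. left; apply Rinv_0_lt_compat; lra.
  unfold e1, e2, e3. apply Rabs_le. lra.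
Qed.

Lemma floor_bounds z : 0 <= z -> z - 1 < INR (floor_nat z) <= z.
Proof.
  intros Hz. unfold floor_nat. destruct (base_Int_part z) as [H1 H2].
  assert (0 <= Int_part z)%Z.
  { assert (-1 < IZR (Int_part z)) by lra. apply lt_IZR in H. lia. }
  rewrite INR_IZR_INZ, Z2Nat.id by exact H. lra.
Qed.

Lemma lim_inv : is_lim (fun A => /A) p_infty 0.
Proof.
  replace (Finite 0) with (Rbar_inv p_infty) by reflexivity.
  apply is_lim_inv; [apply is_lim_id | discriminate].
Qed.

Lemma lim_floor x : 0 < x -> is_lim (fun A => INR (floor_nat (A*x)) / A) p_infty x.
Proof.
  intros Hx. apply (is_lim_le_le_loc (fun A => x - /A) (fun A => x)).
  - exists 0. intros A HA. pose proof (floor_bounds (A*x)) as F.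
    assert (0 <= A * x) by nra. specialize (F H). split.
    + apply Rmult_le_reg_r with A; [lra|]. unfold Rdiv. rewrite Rmult_assoc, Rinv_l by lra.
      replace ((x - /A) * A) with (A*x - 1) by (field; lra). lra.
    + apply Rmult_le_reg_r with A; [lra|]. unfold Rdiv. rewrite Rmult_assoc, Rinv_l by lra. lra.
  - replace (Finite x) with (Finite (x - 0)) by (f_equal; ring).
    apply is_lim_minus'; [apply is_lim_const | apply lim_inv].
  - apply is_lim_const.
Qed.

Lemma hh_cont w : 0 < w -> continuous hh w.
Proof. intros Hw. apply (@ex_derive_continuous R_AbsRing R_NormedModule). unfold hh. auto_derive. lra. Qed.

Lemma lim_hh (f : R -> R) w : 0 < w -> is_lim f p_infty w -> is_lim (fun A => hh (f A)) p_infty (hh w).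
Proof. intros Hw H. apply is_lim_comp_continuous; auto. apply hh_cont; auto. Qed.

Lemma lim_rr c : is_lim (fun A => 3 * (c + ln A + 1) / A) p_infty 0.
Proof.
  apply (is_lim_ext (fun A => 3 * (c + 1) * / A + 3 * (ln A / A))).
  { intros A. unfold Rdiv. ring. }
  replace (Finite 0) with (Finite (3 * (c+1) * 0 + 3 * 0)) by (f_equal; ring).
  apply is_lim_plus'.
  - apply (is_lim_scal_l (fun A => /A) (3*(c+1)) p_infty 0). apply lim_inv.
  - apply (is_lim_scal_l (fun A => ln A / A) 3 p_infty 0). apply is_lim_div_ln_p.
Qed.

Theorem lemma2 (alpha mu : R) (E : nat -> nat -> R) :
  0 < alpha -> 0 < mu -> alpha / mu < 1 ->
  (forall m : nat, is_stationary_PS alpha mu m (E m)) ->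
  forall x y : R, 0 < x -> 0 < y ->
    is_lim (fun A => / A * ln (E (floor_nat (A * y)) (floor_nat (A * x))))
      p_infty (Finite (- K_rate (alpha / mu) x y)).
Proof.
  intros Ha Hm Hr HE x y Hx Hy.
  assert (Hr0 : 0 < alpha / mu) by (apply Rdiv_lt_0_compat; lra).
  set (r := alpha / mu) in *.
  set (Nf := fun A => INR (floor_nat (A * x))).
  set (Mf := fun A => INR (floor_nat (A * y))).
  set (g := fun A => (Mf A / A + / A) * ln (1-r) + Nf A / A * ln r + hh ((Nf A + Mf A)/A)
     - hh (Nf A / A) - hh (Mf A / A)).
  set (rr := fun A => 3 * (ln (x + y + 1) + ln A + 1) / A).
  assert (LN : is_lim (fun A => Nf A / A) p_infty x) by (apply lim_floor; auto).
  assert (LM : is_lim (fun A => Mf A / A) p_infty y) by (apply lim_floor; auto).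
  assert (LS : is_lim (fun A => (Nf A + Mf A) / A) p_infty (x + y)).
  { apply (is_lim_ext (fun A => Nf A / A + Mf A / A)). { intros; unfold Rdiv; ring. }
    apply is_lim_plus'; auto. }
  assert (Lg : is_lim g p_infty (- K_rate r x y)).
  { assert (Hv : - K_rate r x y = (y + 0) * ln (1-r) + x * ln r + hh (x+y) - hh x - hh y).
    { unfold K_rate, hh. rewrite ln_div by lra. ring. }
    rewrite Hv. unfold g.
    apply is_lim_minus'; [apply is_lim_minus'|apply lim_hh; auto].
    2: apply lim_hh; auto.
    apply is_lim_plus'; [apply is_lim_plus'|apply lim_hh; [lra|auto]].
    - apply (is_lim_scal_r (fun A => Mf A / A + / A) (ln (1-r)) p_infty (y+0)).
      apply is_lim_plus'; auto. apply lim_inv.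
    - apply (is_lim_scal_r (fun A => Nf A / A) (ln r) p_infty x). auto. }
  assert (Lr : is_lim rr p_infty 0) by apply lim_rr.
  apply (is_lim_le_le_loc (fun A => g A - rr A) (fun A => g A + rr A)).
  - exists 1. intros A HA.
    rewrite (E_form alpha mu E Ha Hm Hr HE). fold r.
    pose proof (main_est r A (floor_nat (A*y)) (floor_nat (A*x)) (conj Hr0 Hr) ltac:(lra)) as M.
    fold (Nf A) (Mf A) in M. fold (g A) in M.
    assert (Hb : 3 * (ln (Nf A + Mf A + 1) + 1) / A <= rr A).
    { unfold rr. unfold Rdiv. apply Rmult_le_compat_r. left; apply Rinv_0_lt_compat; lra.
      pose proof (floor_bounds (A*x) ltac:(nra)). pose proof (floor_bounds (A*y) ltac:(nra)).
      fold (Nf A) in H. fold (Mf A) in H0.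
      assert (0 <= Nf A) by (apply pos_INR). assert (0 <= Mf A) by (apply pos_INR).
      rewrite <- ln_mult by lra.
      assert (ln (Nf A + Mf A + 1) <= ln ((x + y + 1) * A)) by (apply ln_le; nra).
      lra. }
    apply Rabs_le_between in M.
    fold (Nf A) (Mf A). change (INR (floor_nat (A * y))) with (Mf A). lra.
  - replace (Finite (- K_rate r x y)) with (Finite (- K_rate r x y - 0)) by (f_equal; ring).
    apply is_lim_minus'; auto.
  - replace (Finite (- K_rate r x y)) with (Finite (- K_rate r x y + 0)) by (f_equal; ring).
    apply is_lim_plus'; auto.
Qed.
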